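(* Let $1\le n\le L$. A word $w\in\Omega_{L,n}$ with $w_1=\bullet_1$ belongs to $\Omega'^{\{1\}}$ if and only if, for every $i\in\{1,\dots,n\}$, every letter $\Box_i$ in $w$ occurs at a position (in the linear order $1,\dots,L$) to the right of the position of $\bullet_i$.
   Context: Particle labels are taken modulo $n$. $\Omega_{L,n}$ is the set of words $w_1\cdots w_L$ on the ring $\mathbb{Z}/L\mathbb{Z}$ over the alphabet $\{\bullet_1,\dots,\bullet_n,\Box_1,\dots,\Box_n\}$ in which each $\bullet_k$ occurs exactly once, the $\bullet_1,\dots,\bullet_n$ appear in this cyclic order, and the remaining $L-n$ letters are arbitrary $\Box_i$'s. For $w\in\Omega_{L,n}$ let $b_k$ be the position of $\bullet_k$ and $C_k$ the set of positions strictly between $b_k$ and $b_{k+1}$ going cyclically forward ($b_{n+1}=b_1$). For $i,k\in\{1,\dots,n\}$ set $w_\Box(i,k)=p_1\cdots p_{i-1}q_{i+1}\cdots q_kp_{k+1}\cdots p_n$ if $i\le k$ and $w_\Box(i,k)=q_1\cdots q_kp_{k+1}\cdots p_{i-1}q_{i+1}\cdots q_n$ if $k<i$ (empty products are $1$), as monomials in indeterminates $p_1,\dots,p_n,q_1,\dots,q_n$. The weight is the monomial $\mathrm{wt}(w)=\prod_{k=1}^n\prod_{j\in C_k}w_\Box(i_j,k)$ where $w_j=\Box_{i_j}$. For $I\subseteq\{1,\dots,n\}$, $\Omega^I_{L,n}$ is the set of $w\in\Omega_{L,n}$ with $\mathrm{wt}(w)\neq0$ when $q_k=0$ for $k\in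 I$ and all other rates are positive (equivalently, the monomial $\mathrm{wt}(w)$ contains no $q_k$ with $k\in I$), and $\Omega'^{I}$ is the set of $w\in\Omega^I_{L,n}$ with $w_1=\bullet_1$. *)

(* Defs.v *)
From mathcomp Require Import all_boot.
Set Implicit Arguments. Unset Strict Implicit. Unset Printing Implicit Defensive.

(* Conventions (0-indexed): particle labels are 'I_n (paper label k+1 is our k),
   positions are 0..L-1 (paper position j+1 is our j). *)
Definition letter (n : nat) := ('I_n + 'I_n)%type.
Definition Bullet {n} (k : 'I_n) : letter n := inl k.
Definition Box {n} (i : 'I_n) : letter n := inr i.

Section Words.
Variables (L n : nat).
Implicit Types (w : seq (letter n)) (i k m : 'I_n).

Definition bpos w k : nat := index (Bullet k) w.

Definition succl k : 'I_n := ordS k.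

Definition fdist (a b : nat) : nat := if a == b then L else (b + L - a) %% L.

(* j lies in C_k : strictly between b_k and b_{k+1}, going cyclically forward *)
Definition inC w k (j : nat) : bool :=
  [&& j < L, 0 < (j + L - bpos w k) %% L &
      (j + L - bpos w k) %% L < fdist (bpos w k) (bpos w (succl k))].

(* Omega_{L,n}: each bullet occurs exactly once, bullets in cyclic order
   (no bullet strictly inside any arc C_k), the rest are boxes. *)
Definition inOmega w : Prop :=
  [/\ size w = L,
      forall k, count_mem (Bullet k) w = 1 &
      forall k k', ~~ inC w k (bpos w k')].

(* The monomial w_Box(i,k) in p_1..p_n,q_1..q_n, given by its exponent vectors. *)
Definition wBox_pdeg i k m : nat :=
  if i <= k then ((m < i) || (k < m)) : nat else ((k < m) && (m < i)) : nat.
Definition wBox_qdeg i k m : nat :=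
  if i <= k then ((i < m) && (m <= k)) : nat else ((m <= k) || (i < m)) : nat.

Definition letter_pdeg w k j m : nat :=
  if onth w j is Some (inr i) then wBox_pdeg i k m else 0.
Definition letter_qdeg w k j m : nat :=
  if onth w j is Some (inr i) then wBox_qdeg i k m else 0.

(* wt(w) = prod_k prod_{j in C_k} w_Box(i_j,k), as exponent vectors *)
Definition wt_pdeg w m : nat :=
  \sum_(k < n) \sum_(j < L | inC w k j) letter_pdeg w k j m.
Definition wt_qdeg w m : nat :=
  \sum_(k < n) \sum_(j < L | inC w k j) letter_qdeg w k j m.

Definition inOmegaI (I : {set 'I_n}) w : Prop :=
  inOmega w /\ forall m, m \in I -> wt_qdeg w m = 0.

Definition starts_bullet1 w : Prop :=
  exists k : 'I_n, val k = 0 /\ onth w 0 = Some (Bullet k).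

Definition inOmega' (I : {set 'I_n}) w : Prop :=
  inOmegaI I w /\ starts_bullet1 w.

End Words.

(* Main.v *)
Require Import Defs.
From mathcomp Require Import all_boot.
From mathcomp Require Import zify.
Set Implicit Arguments. Unset Strict Implicit.

Section P.
Variables (L n : nat) (w : seq (letter n)).
Hypotheses (Hsize : size w = L) (Hcnt : forall k, count_mem (Bullet k) w = 1)
  (HC : forall k k', ~~ inC L w k (bpos w k')).
Variable k0 : 'I_n.
Hypotheses (Hk0 : nat_of_ord k0 = 0) (Hw0 : onth w 0 = Some (Bullet k0)).

Lemma memb k : Bullet k \in w.
Proof. by rewrite -has_pred1 has_count Hcnt. Qed.

Lemma bpos_lt k : bpos w k < L.
Proof. by rewrite -Hsize /bpos index_mem memb. Qed.

Lemma nth_bpos k x0 : nth x0 w (bpos w k) = Bullet k.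
Proof. by rewrite nth_index // memb. Qed.

Lemma bpos_inj {k k'} : bpos w k = bpos w k' -> k = k'.
Proof.
move=> E; have := nth_bpos k (Bullet k); rewrite E nth_bpos.
by case.
Qed.

Lemma b0 : bpos w k0 = 0.
Proof.
move: Hw0; rewrite /bpos; case: w => [|x s] //= [->].
by rewrite eqxx.
Qed.

Lemma modL a b : a < L -> b <= a -> (a + L - b) %% L = a - b.
Proof. move=> aL ba; rewrite -addnBAC // modnDr modn_small //; lia. Qed.

Lemma modL2 a b : a < L -> a < b -> b < L -> (a + L - b) %% L = a + L - b.
Proof. move=> aL ab bL; rewrite modn_small //; lia. Qed.

Lemma val_succl (k : 'I_n) : k.+1 < n -> nat_of_ord (succl k) = k.+1.
Proof. by move=> h; rewrite /succl /= modn_small. Qed.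

Lemma ne_k0 (k : 'I_n) : nat_of_ord k <> 0 -> bpos w k <> 0.
Proof. move=> h E; apply: h; rewrite -b0 in E; by rewrite (bpos_inj E). Qed.

Lemma bpos_succ (k : 'I_n) : k.+1 < n -> bpos w k < bpos w (succl k).
Proof.
move=> h; have hs := val_succl h.
have ne : bpos w k <> bpos w (succl k).
  by move/bpos_inj => E; move: hs; rewrite -E; lia.
have c0 : bpos w (succl k) <> 0 by apply: ne_k0; rewrite hs.
rewrite ltn_neqAle; apply/andP; split; first by apply/eqP.
rewrite leqNgt; apply/negP => lt.
have := HC k k0; rewrite b0 /inC /fdist.
have bL := bpos_lt k; have cL := bpos_lt (succl k).
have -> : (0 + L - bpos w k) %% L = L - bpos w k by rewrite modn_small; lia.
have -> : (bpos w k == bpos w (succl k)) = false by apply/eqP.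
rewrite (modL2 cL lt bL).
apply/negP/negPn; apply/and3P; split; lia.
Qed.

Lemma bpos_mono d (k m : 'I_n) : nat_of_ord m = k + d.+1 -> bpos w k < bpos w m.
Proof.
elim: d m => [|d IH] m hm.
  have h : k.+1 < n by have := ltn_ord m; lia.
  have -> : m = succl k by apply: ord_inj; rewrite val_succl //; lia.
  exact: bpos_succ.
have h' : k + d.+1 < n by have := ltn_ord m; lia.
pose m' : 'I_n := Ordinal h'.
have h2 : m'.+1 < n by have := ltn_ord m; rewrite /= ; lia.
have -> : m = succl m' by apply: ord_inj; rewrite val_succl //= hm; lia.
apply: ltn_trans (IH m' erefl) (bpos_succ h2).
Qed.

Lemma bpos_le (k m : 'I_n) : k <= m -> bpos w k <= bpos w m.
Proof.
move=> km; case: (ltngtP k m) => [lt|gt|eq].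
- by apply: ltnW; apply: (bpos_mono (d := m - k.+1)); lia.
- lia.
- by rewrite (ord_inj eq).
Qed.

Lemma box_ne {j i} (m : 'I_n) : onth w j = Some (Box i) -> j <> bpos w m.
Proof.
move=> h E; have := @onth_nth _ (Bullet m) _ _ _ h; rewrite E nth_bpos; by [].
Qed.

Lemma box_dir j (i : 'I_n) : j < L -> onth w j = Some (Box i) ->
  (bpos w i < j) <-> (forall k, inC L w k j -> i <= k).
Proof.
move=> jL hj; split.
  move=> bij k; apply: contraTT; rewrite -ltnNge => ki.
  have h : k.+1 < n by have := ltn_ord i; lia.
  have hs := val_succl h.
  have le1 : bpos w (succl k) <= bpos w i by apply: bpos_le; rewrite hs.
  have lt1 := bpos_succ h.
  rewrite /inC /fdist (modL jL); last by lia.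
  have -> : (bpos w k == bpos w (succl k)) = false by apply/eqP; lia.
  rewrite (modL (bpos_lt _)); last by lia.
  apply/negP => /and3P[_ _]; lia.
move=> H; rewrite ltnNge; apply/negP => le.
have lt : j < bpos w i by have := box_ne (m := i) hj; lia.
suff claim : forall d (m : 'I_n), nat_of_ord m = d -> j < bpos w m ->
    exists k : 'I_n, k < m /\ inC L w k j.
  have [k [ki kC]] := claim _ i erefl lt.
  by have := H k kC; lia.
clear le H lt.
elim=> [|d IH] m hm lt.
  have : m = k0 by apply: ord_inj; rewrite hm Hk0.
  by move=> E; move: lt; rewrite E b0.
have h' : d < n by have := ltn_ord m; lia.
pose m' : 'I_n := Ordinal h'.
have h2 : m'.+1 < n by have := ltn_ord m; rewrite /= ; lia.
have Em : m = succl m' by apply: ord_inj; rewrite val_succl //= hm.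
case: (ltnP (bpos w m') j) => hb.
  exists m'; split; first by rewrite hm.
  have lt1 := bpos_succ h2.
  rewrite /inC /fdist (modL jL); last by lia.
  have -> : (bpos w m' == bpos w (succl m')) = false by apply/eqP; lia.
  rewrite (modL (bpos_lt _)); last by lia.
  rewrite -Em; apply/and3P; split; lia.
have lt' : j < bpos w m' by have := box_ne (m := m') hj; lia.
have [k [kl kC]] := IH m' erefl lt'.
exists k; split => //; rewrite hm; simpl in kl; lia.
Qed.

End P.

Theorem proposition5p3 (L n : nat) (w : seq (letter n)) :
  1 <= n <= L ->
  inOmega L w ->
  starts_bullet1 w ->
  (inOmega' L [set k : 'I_n | val k == 0] w <->
   forall (i : 'I_n) (j : nat), j < L -> onth w j = Some (Box i) ->
     bpos w i < j).
Proof.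
move=> _ [Hs Hc HC] [k0 [Hk0 Hw0]]; split.
  move=> [[_ H] _] i j jL hj.
  apply/(@box_dir L n w Hs Hc HC k0 Hk0 Hw0 _ _ jL hj) => k kC.
  have := H k0; rewrite inE Hk0 => /(_ isT).
  rewrite /wt_qdeg (bigD1 k) //= => /eqP; rewrite addn_eq0 => /andP[/eqP H1 _].
  move: H1; rewrite (bigD1 (Ordinal jL)) //= => /eqP; rewrite addn_eq0.
  move=> /andP[/eqP Hq _]; move: Hq; rewrite /letter_qdeg hj /wBox_qdeg /=.
  have E0 : nat_of_ord k0 = 0 := Hk0; by case: (leqP i k); rewrite E0.
move=> Hb; split; last by exists k0. split; first by []. move=> m; rewrite inE => /eqP Hm.
apply: big1 => k _; apply: big1 => j Hj.
rewrite /letter_qdeg; case E: onth => [[b|i]|] //.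
have ik : i <= k.
  by apply: (proj1 (@box_dir L n w Hs Hc HC k0 Hk0 Hw0 _ _ (ltn_ord j) E)) => //; apply: Hb.
by rewrite /wBox_qdeg ik Hm ltn0.
Qed.
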